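(* Let $L_{\mathbb{Z}_p}$ be a lattice with integral quadratic form $Q_L$ and consider $\Lambda_0=L_{\mathbb{Z}_p}\perp H^2=L_{\mathbb{Z}_p}\oplus\mathbb{Z}_p^4$ with $Q(x_L,x_0,x_1,x_2,x_3)=Q_L(x_L)+x_0x_1+x_2x_3$. Let $w\in\Lambda_0$ with $Q(w)\neq0$. Then the orthogonal complement $\langle w\rangle^\perp=\{x\in\Lambda_0:\langle w,x\rangle=0\}$ (with the restricted form) is isometric to $H\perp\Lambda$ for some lattice $\Lambda$.
   Context: $\langle v,w\rangle=Q(v+w)-Q(v)-Q(w)$ is the bilinear form of $Q$; $Q_L$ integral means $Q_L(L_{\mathbb{Z}_p})\subseteq\mathbb{Z}_p$. $H$ denotes the hyperbolic plane $\mathbb{Z}_p^2$ with $Q(x,y)=xy$ and $H^2=H\perp H$. *)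

(* Defs.v *)
From HB Require Import structures.
From mathcomp Require Import all_boot all_order all_algebra.
From Stdlib Require Import ClassicalEpsilon FunctionalExtensionality ProofIrrelevance.
Set Implicit Arguments. Unset Strict Implicit. Unset Printing Implicit Defensive.
Import GRing.Theory.
Local Open Scope ring_scope.

(* The ring Z_p of p-adic integers, built as the inverse limit         *)
(*   padint p = lim_n Z/p^(n+1)Z                                       *)
(* of coherent sequences (x_n)_n with x_n in 'Z_(p^(n+1)) and          *)
(* x_{n+1} = x_n mod p^(n+1).  For p <= 1 the base is replaced by 2    *)
(* (as for 'Z_p), so the construction is only meaningful for prime p,  *)
(* which the main theorem assumes.                                     *)
Definition padq (p : nat) : nat := maxn p 2.
Definition padM (p n : nat) : nat := (padq p ^ n.+1)%N.
Lemma padM_gt1 p n : (1 < padM p n)%N.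
Proof.
rewrite /padM /padq; have h : (1 < maxn p 2)%N by rewrite leq_max orbT.
by rewrite (leq_trans h) // -{1}(expn1 (maxn p 2)) leq_pexp2l // ltnW.
Qed.
Definition padL (p n : nat) := 'Z_(padM p n).
Definition padred (p n : nat) (a : padL p n.+1) : padL p n := (val a)%:R.

Lemma padredK p n k : padred (k%:R : padL p n.+1) = k%:R.
Proof.
apply: val_inj => /=; rewrite /padred.
rewrite !val_Zp_nat ?padM_gt1 //.
have -> : val (k%:R : padL p n.+1) = (k %% padM p n.+1)%N by exact: val_Zp_nat (padM_gt1 p n.+1) k.
have hd : (padM p n %| padM p n.+1)%N by rewrite /padM dvdn_exp2l.
exact: (modn_dvdm k hd).
Qed.
Lemma padredD p n a b : padred (a + b : padL p n.+1) = padred a + padred b.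
Proof. by rewrite -(natr_Zp a) -(natr_Zp b) -natrD !padredK natrD. Qed.
Lemma padredM p n a b : padred (a * b : padL p n.+1) = padred a * padred b.
Proof. by rewrite -(natr_Zp a) -(natr_Zp b) -natrM !padredK natrM. Qed.
Lemma padred1 p n : padred (1 : padL p n.+1) = 1.
Proof. by rewrite -(natr_Zp 1) padredK. Qed.
Lemma padred0 p n : padred (0 : padL p n.+1) = 0.
Proof. by rewrite -(natr_Zp 0) padredK. Qed.
Lemma padredN p n a : padred (- a : padL p n.+1) = - padred a.
Proof. by apply/eqP; rewrite -subr_eq0 opprK -padredD addNr padred0. Qed.

Record padint (p : nat) := MkZp {
  zseq : forall n, padL p n;
  zcoh : forall n, padred (zseq n.+1) = zseq n }.

Lemma Zp_ext p (x y : padint p) : (forall n, zseq x n = zseq y n) -> x = y.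
Proof.
case: x y => [x hx] [y hy] /= e.
have exy : x = y by apply: functional_extensionality_dep.
subst y; congr MkZp; apply: proof_irrelevance.
Qed.


Definition Zp_eqb (p : nat) (x y : padint p) : bool :=
  if excluded_middle_informative (x = y) then true else false.
Lemma Zp_eqP (p : nat) : Equality.axiom (@Zp_eqb p).
Proof.
move=> x y; rewrite /Zp_eqb; case: excluded_middle_informative => h.
  by constructor. by constructor.
Qed.
HB.instance Definition _ (p : nat) := hasDecEq.Build (padint p) (@Zp_eqP p).

Definition Zp_find (p : nat) (P : pred (padint p)) (n : nat) : option (padint p) :=
  match excluded_middle_informative (exists x, P x) with
  | left H => Some (proj1_sig (constructive_indefinite_description _ H))
  | right _ => None
  end.
Lemma Zp_find_some (p : nat) (P : pred (padint p)) n x : Zp_find P n = Some x -> P x.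
Proof.
rewrite /Zp_find; case: excluded_middle_informative => // H [<-].
exact: proj2_sig (constructive_indefinite_description _ H).
Qed.
Lemma Zp_find_ex (p : nat) (P : pred (padint p)) : (exists x, P x) -> exists n, Zp_find P n.
Proof.
move=> H; exists 0%N; rewrite /Zp_find.
by case: excluded_middle_informative.
Qed.
Lemma Zp_find_ext (p : nat) (P Q : pred (padint p)) : P =1 Q -> Zp_find P =1 Zp_find Q.
Proof.
by move=> e; have -> : P = Q by apply: functional_extensionality.
Qed.
HB.instance Definition _ (p : nat) := hasChoice.Build (padint p) (@Zp_find_some p) (@Zp_find_ex p) (@Zp_find_ext p).

Definition Zp_zero (p : nat) : padint p := MkZp (fun n => padred0 p n).
Definition Zp_one (p : nat) : padint p := MkZp (fun n => padred1 p n).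
Definition Zp_add (p : nat) (x y : padint p) : padint p :=
  MkZp (fun n => etrans (padredD _ _) (f_equal2 +%R (zcoh x n) (zcoh y n))).
Definition Zp_mul (p : nat) (x y : padint p) : padint p :=
  MkZp (fun n => etrans (padredM _ _) (f_equal2 *%R (zcoh x n) (zcoh y n))).
Definition Zp_opp (p : nat) (x : padint p) : padint p :=
  MkZp (fun n => etrans (padredN _) (f_equal -%R (zcoh x n))).

Lemma Zp_addA (p : nat) : associative (@Zp_add p).
Proof. by move=> x y z; apply: Zp_ext => n /=; rewrite addrA. Qed.
Lemma Zp_addC (p : nat) : commutative (@Zp_add p).
Proof. by move=> x y; apply: Zp_ext => n /=; rewrite addrC. Qed.
Lemma Zp_add0 (p : nat) : left_id (Zp_zero p) (@Zp_add p).
Proof. by move=> x; apply: Zp_ext => n /=; rewrite add0r. Qed.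
Lemma Zp_addN (p : nat) : left_inverse (Zp_zero p) (@Zp_opp p) (@Zp_add p).
Proof. by move=> x; apply: Zp_ext => n /=; rewrite addNr. Qed.
HB.instance Definition _ (p : nat) := GRing.isZmodule.Build (padint p) (@Zp_addA p) (@Zp_addC p) (@Zp_add0 p) (@Zp_addN p).

Lemma Zp_mulA (p : nat) : associative (@Zp_mul p).
Proof. by move=> x y z; apply: Zp_ext => n /=; rewrite mulrA. Qed.
Lemma Zp_mulC (p : nat) : commutative (@Zp_mul p).
Proof. by move=> x y; apply: Zp_ext => n /=; rewrite mulrC. Qed.
Lemma Zp_mul1 (p : nat) : left_id (Zp_one p) (@Zp_mul p).
Proof. by move=> x; apply: Zp_ext => n /=; rewrite mul1r. Qed.
Lemma Zp_mulDl (p : nat) : left_distributive (@Zp_mul p) (@Zp_add p).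
Proof. by move=> x y z; apply: Zp_ext => n /=; rewrite mulrDl. Qed.
Lemma Zp_one_neq0 (p : nat) : Zp_one p != Zp_zero p.
Proof.
apply/eqP => /(f_equal (fun x => zseq x 0%N)) /= /eqP.
by rewrite oner_eq0.
Qed.
HB.instance Definition _ (p : nat) := GRing.Zmodule_isComNzRing.Build (padint p)
  (@Zp_mulA p) (@Zp_mulC p) (@Zp_mul1 p) (@Zp_mulDl p) (@Zp_one_neq0 p).


Definition polar (R : comNzRingType) (V : lmodType R) (Q : V -> R) (x y : V) : R :=
  Q (x + y) - Q x - Q y.

(* Q is a quadratic form: Q(a x) = a^2 Q(x) and its polar form is bilinear
   (linearity in the first argument; the polar form is symmetric by definition). *)
Definition quad_form (R : comNzRingType) (V : lmodType R) (Q : V -> R) : Prop :=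
  (forall (a : R) (x : V), Q (a *: x) = a ^+ 2 * Q x) /\
  (forall (a : R) (x y z : V), polar Q (a *: x + y) z = a * polar Q x z + polar Q y z).

Definition o4_0 : 'I_4 := @Ordinal 4 0 isT.
Definition o4_1 : 'I_4 := @Ordinal 4 1 isT.
Definition o4_2 : 'I_4 := @Ordinal 4 2 isT.
Definition o4_3 : 'I_4 := @Ordinal 4 3 isT.
Definition o2_0 : 'I_2 := @Ordinal 2 0 isT.
Definition o2_1 : 'I_2 := @Ordinal 2 1 isT.

Definition QLH2 (R : comNzRingType) (n : nat) (QL : 'rV[R]_n -> R)
    (v : 'rV[R]_n * 'rV[R]_4) : R :=
  QL v.1 + v.2 0 o4_0 * v.2 0 o4_1 + v.2 0 o4_2 * v.2 0 o4_3.

Definition QHL (R : comNzRingType) (m : nat) (QLam : 'rV[R]_m -> R)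
    (y : 'rV[R]_2 * 'rV[R]_m) : R :=
  y.1 0 o2_0 * y.1 0 o2_1 + QLam y.2.

(* Main.v *)
Require Import Defs.
From HB Require Import structures.
From mathcomp Require Import all_boot all_order all_algebra ring.
From Stdlib Require Import Classical ClassicalEpsilon.
Import GRing.Theory.
Local Open Scope ring_scope.

Section Padic.
Variable p : nat.
Hypothesis pP : prime p.

Lemma padqE : padq p = p.
Proof. by rewrite /padq; apply/maxn_idPl; exact: prime_gt1. Qed.

Lemma padMS n : padM p n.+1 = (p * padM p n)%N.
Proof. by rewrite /padM expnS padqE. Qed.
Lemma padM0 : padM p 0 = p.
Proof. by rewrite /padM padqE expn1. Qed.

Lemma valnat n k : val (k%:R : padL p n) = (k %% padM p n)%N.
Proof. exact: val_Zp_nat (padM_gt1 p n) k. Qed.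

Lemma ltvalM n (a : padL p n) : (val a < padM p n)%N.
Proof.
have e : val a = (val a %% padM p n)%N by rewrite -valnat natr_Zp.
by rewrite e ltn_pmod // ltnW // padM_gt1.
Qed.

Lemma zval_coh (x : padint p) n :
  val (zseq x n) = (val (zseq x n.+1) %% padM p n)%N.
Proof. by rewrite -(zcoh x n) /padred valnat. Qed.

Lemma zval0' (x : padint p) n : val (zseq x 0) = (val (zseq x n) %% padM p 0)%N.
Proof.
elim: n => [|n IH]; first by rewrite modn_small // ltvalM.
rewrite IH zval_coh; apply: modn_dvdm.
by rewrite /padM dvdn_exp2l.
Qed.

Lemma zval0 (x : padint p) n : val (zseq x 0) = (val (zseq x n) %% p)%N.
Proof. by rewrite (zval0' x n) padM0. Qed.

Lemma zseq_nat (k n : nat) : zseq (k%:R : padint p) n = k%:R.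
Proof.
elim: k => [|k IH] //.
by rewrite -addn1 !natrD -IH.
Qed.

Definition isU (x : padint p) := exists y, x * y = 1.

Lemma copM n v : (v %% p != 0)%N -> coprime (padM p n) v.
Proof.
move=> h; rewrite /padM padqE coprime_pexpl // prime_coprime // /dvdn.
Qed.

Lemma zunit_n (x : padint p) n : zseq x 0 != 0 -> zseq x n \is a GRing.unit.
Proof.
move=> h; rewrite -[zseq x n]natr_Zp unitZpE ?padM_gt1 //.
apply: copM; rewrite -zval0; apply: contra h => /eqP h; apply/eqP/val_inj.
by rewrite /= h.
Qed.

Lemma P1 (x : padint p) : zseq x 0 != 0 -> isU x.
Proof.
move=> h.
have coh : forall n, padred ((zseq x n.+1)^-1) = (zseq x n)^-1.
  move=> n; apply/esym/mulr1_eq.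
  by rewrite -(zcoh x n) -padredM mulrV ?padred1 // zunit_n.
exists (@MkZp p (fun n => (zseq x n)^-1) coh).
by apply: Zp_ext => n /=; rewrite mulrV // zunit_n.
Qed.

Lemma natfact M v : (p %| v)%N ->
  ((v %/ p) %% (p * M) %% M = ((v %% (p * M)) %/ p) %% M)%N.
Proof.
move=> /dvdnP [a ->].
rewrite mulnC -muln_modr mulKn ?prime_gt0 // mulKn ?prime_gt0 //.
rewrite modn_mod; apply: modn_dvdm; by rewrite dvdn_mull.
Qed.

Lemma P7 (x : padint p) : zseq x 0 = 0 -> exists y, x = p%:R * y.
Proof.
move=> h0.
have dv : forall n, (p %| val (zseq x n))%N.
  by move=> n; rewrite /dvdn -zval0 h0.
pose ys := fun n => ((val (zseq x n.+1)) %/ p)%:R : padL p n.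
have coh : forall n, padred (ys n.+1) = ys n.
  move=> n; apply: val_inj; rewrite /padred /ys !valnat.
  rewrite (zval_coh x n.+1).
  by have := natfact (padM p n) _ (dv n.+2); rewrite -padMS => ->.
exists (@MkZp p ys coh); apply: Zp_ext => n /=.
rewrite zseq_nat /ys -natrM mulnC divnK // -(zcoh x n) /padred.
by [].
Qed.

Lemma natfact2 n v : (v %% padM p n = 0 -> (p * v) %% padM p n.+1 = 0)%N.
Proof. by move=> h; rewrite padMS -muln_modr h muln0. Qed.

Lemma P6step (x y : padint p) N : x = p%:R * y -> zseq x N.+1 != 0 -> zseq y N != 0.
Proof.
move=> -> ; apply: contraNneq => hy /=.
apply/eqP; rewrite zseq_nat -[zseq y N.+1]natr_Zp -natrM; apply: val_inj.
have h : (val (zseq y N.+1) %% padM p N = 0)%N by rewrite -zval_coh hy.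
by rewrite /= valnat; apply: natfact2.
Qed.

Lemma Zp0seq n : zseq (0 : padint p) n = 0. Proof. by []. Qed.

Lemma P6 (x : padint p) : x != 0 -> exists k u, isU u /\ x = p%:R ^+ k * u.
Proof.
move=> hx.
have [N hN] : exists N, zseq x N != 0.
  case: (classic (exists N, zseq x N != 0)) => // hall.
  move: hx; have -> : x = 0 by apply: Zp_ext => n; apply/eqP; apply/negPn/negP => hn; apply: hall; exists n.
  by rewrite eqxx.
elim: N x hx hN => [|N IH] x hx hN.
  by exists 0%N, x; split; [exact: P1|rewrite expr0 mul1r].
have [h0|h0] := eqVneq (zseq x 0) 0.
  have [y hy] := P7 _ h0.
  have hyN := P6step _ _ _ hy hN.
  have hy0 : y != 0 by apply: contraNneq hyN => ->.
  have [k [u [hu e]]] := IH y hy0 hyN.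
  by exists k.+1, u; split => //; rewrite hy e exprS mulrA.
by exists 0%N, x; split; [exact: P1|rewrite expr0 mul1r].
Qed.

Lemma P5 N : (p%:R ^+ N : padint p) != 0.
Proof.
apply/negP => /eqP /(f_equal (fun z => val (zseq z N))).
rewrite -natrX zseq_nat valnat /= modn_small; last first.
  by rewrite /padM padqE ltn_exp2l // prime_gt1.
move=> /eqP; rewrite expn_eq0 => /andP [h _]; move: h; rewrite (gtn_eqF (prime_gt0 pP)) //=.
Qed.

Lemma P3 (a b : padint p) : a * b = 0 -> a = 0 \/ b = 0.
Proof.
move=> hab; have [->|ha] := eqVneq a 0; first by left.
have [->|hb] := eqVneq b 0; first by right.
exfalso; have [k [u [[u' hu] ea]]] := P6 _ ha.
have [l [v [[v' hv] eb]]] := P6 _ hb.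
have := P5 (k + l); apply/negP/negPn/eqP.
have -> : (p%:R ^+ (k + l) : padint p) = a * b * (u' * v').
  rewrite ea eb exprD.
  have <- : p%:R ^+ k * p%:R ^+ l * (u * u') * (v * v') = p%:R ^+ k * u * (p%:R ^+ l * v) * (u' * v') by ring.
  by rewrite hu hv !mulr1.
by rewrite hab mul0r.
Qed.

Lemma P2 (a b : padint p) : (exists c, b = a * c) \/ (exists c, a = b * c).
Proof.
have [->|ha] := eqVneq a 0; first by right; exists 0; rewrite mulr0.
have [->|hb] := eqVneq b 0; first by left; exists 0; rewrite mulr0.
have [k [u [[u' hu] ea]]] := P6 _ ha.
have [l [v [[v' hv] eb]]] := P6 _ hb.
case: (leqP k l) => hkl.
  left; exists (u' * p%:R ^+ (l - k) * v).
  have el : l = (k + (l - k))%N by rewrite subnKC.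
  rewrite ea eb {1}el exprD.
  have <- : p%:R ^+ k * p%:R ^+ (l - k) * v * (u * u') = p%:R ^+ k * u * (u' * p%:R ^+ (l - k) * v) by ring.
  by rewrite hu mulr1.
right; exists (v' * p%:R ^+ (k - l) * u).
have el : k = (l + (k - l))%N by rewrite subnKC // ltnW.
rewrite ea eb {1}el exprD.
have <- : p%:R ^+ l * p%:R ^+ (k - l) * u * (v * v') = p%:R ^+ l * v * (v' * p%:R ^+ (k - l) * u) by ring.
by rewrite hv mulr1.
Qed.

Lemma P4 : (2 : padint p) != 0.
Proof.
apply/negP => /eqP /(f_equal (fun z => val (zseq z 1))).
rewrite zseq_nat valnat /= modn_small //.
rewrite /padM padqE.
have h2 := prime_gt1 pP.
by apply: (@leq_trans (2 ^ 2)); [|rewrite leq_exp2r].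
Qed.

Lemma mulfI' (c a b : padint p) : c != 0 -> c * a = c * b -> a = b.
Proof.
move=> hc e; apply/eqP; rewrite -subr_eq0; apply/eqP.
have : c * (a - b) = 0 by rewrite mulrBr e subrr.
by case/P3 => // h; rewrite h eqxx in hc.
Qed.

Lemma zseqD (x y : padint p) n : zseq (x + y) n = zseq x n + zseq y n. Proof. by []. Qed.
Lemma zseqM (x y : padint p) n : zseq (x * y) n = zseq x n * zseq y n. Proof. by []. Qed.
Lemma zseqN (x : padint p) n : zseq (- x) n = - zseq x n. Proof. by []. Qed.
Lemma zseq1 n : zseq (1 : padint p) n = 1. Proof. by []. Qed.

Lemma find_div (s : seq (padint p)) : has (fun x => x != 0) s ->
  exists c, [/\ c \in s, c != 0 & forall y, y \in s -> exists t, y = c * t].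
Proof.
elim: s => [|a s IH] //= hs.
case: (boolP (has (fun x => x != 0) s)) => hs'.
  have [b [hb hb0 hbd]] := IH hs'.
  case: (P2 a b) => [[t et]|[t et]].
    have ha : a != 0 by apply: contraNneq hb0 => ha; rewrite et ha mul0r.
    exists a; split => //; first by rewrite inE eqxx.
    move=> y; rewrite inE => /orP [/eqP ->|hy]; first by exists 1; rewrite mulr1.
    by have [t' ->] := hbd y hy; exists (t * t'); rewrite et mulrA.
  exists b; split => //; first by rewrite inE hb orbT.
  move=> y; rewrite inE => /orP [/eqP ->|hy]; first by exists t.
  exact: hbd.
have ha : a != 0 by move: hs; rewrite (negPf hs') orbF.
exists a; split => //; first by rewrite inE eqxx.
move=> y; rewrite inE => /orP [/eqP ->|hy]; first by exists 1; rewrite mulr1.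
exists 0; rewrite mulr0; apply/eqP; apply: contraNT hs' => hy0.
by apply/hasP; exists y.
Qed.

End Padic.

Section Gen.
Variable R : comNzRingType.
Variable n : nat.
Variable QL : 'rV[R]_n -> R.
Hypothesis hQL : quad_form QL.

Definition mk4 (a b c d : R) : 'rV[R]_4 := \row_(i < 4) nth 0 [:: a; b; c; d] i.
Definition mk2 (a b : R) : 'rV[R]_2 := \row_(i < 2) nth 0 [:: a; b] i.

Lemma mk4_0 a b c d : mk4 a b c d 0 o4_0 = a. Proof. by rewrite mxE. Qed.
Lemma mk4_1 a b c d : mk4 a b c d 0 o4_1 = b. Proof. by rewrite mxE. Qed.
Lemma mk4_2 a b c d : mk4 a b c d 0 o4_2 = c. Proof. by rewrite mxE. Qed.
Lemma mk4_3 a b c d : mk4 a b c d 0 o4_3 = d. Proof. by rewrite mxE. Qed.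
Lemma mk2_0 a b : mk2 a b 0 o2_0 = a. Proof. by rewrite mxE. Qed.
Lemma mk2_1 a b : mk2 a b 0 o2_1 = b. Proof. by rewrite mxE. Qed.

Lemma row4_eq (u v : 'rV[R]_4) : u 0 o4_0 = v 0 o4_0 -> u 0 o4_1 = v 0 o4_1 ->
  u 0 o4_2 = v 0 o4_2 -> u 0 o4_3 = v 0 o4_3 -> u = v.
Proof.
move=> h0 h1 h2 h3; apply/rowP => i.
case: i => [[|[|[|[|i]]]] hi] //.
- by rewrite (_ : Ordinal hi = o4_0) //; apply: val_inj.
- by rewrite (_ : Ordinal hi = o4_1) //; apply: val_inj.
- by rewrite (_ : Ordinal hi = o4_2) //; apply: val_inj.
- by rewrite (_ : Ordinal hi = o4_3) //; apply: val_inj.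
Qed.

Lemma row2_eq (u v : 'rV[R]_2) : u 0 o2_0 = v 0 o2_0 -> u 0 o2_1 = v 0 o2_1 -> u = v.
Proof.
move=> h0 h1; apply/rowP => i.
case: i => [[|[|i]] hi] //.
- by rewrite (_ : Ordinal hi = o2_0) //; apply: val_inj.
- by rewrite (_ : Ordinal hi = o2_1) //; apply: val_inj.
Qed.

Notation V := ('rV[R]_n * 'rV[R]_4)%type.

Lemma fst_add (x y : V) : (x + y).1 = x.1 + y.1. Proof. by []. Qed.
Lemma snd_add (x y : V) : (x + y).2 = x.2 + y.2. Proof. by []. Qed.
Lemma fst_scale a (x : V) : (a *: x).1 = a *: x.1. Proof. by []. Qed.
Lemma snd_scale a (x : V) : (a *: x).2 = a *: x.2. Proof. by []. Qed.


Lemma QL0 : QL 0 = 0.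
Proof. by rewrite -(scale0r (0 : 'rV[R]_n)) (proj1 hQL) expr0n mul0r. Qed.
Lemma QLN x : QL (- x) = QL x.
Proof. by rewrite -scaleN1r (proj1 hQL) sqrrN expr1n mul1r. Qed.
Lemma polarC (x y : 'rV[R]_n) : polar QL x y = polar QL y x.
Proof. by rewrite /polar [y + x]addrC; ring. Qed.
Lemma polarZDr a (x y z : 'rV[R]_n) : polar QL z (a *: x + y) = a * polar QL z x + polar QL z y.
Proof. by rewrite polarC (proj2 hQL) !(polarC z). Qed.
Lemma polarDl (x y z : 'rV[R]_n) : polar QL (x + y) z = polar QL x z + polar QL y z.
Proof. by have := (proj2 hQL) 1 x y z; rewrite scale1r mul1r. Qed.
Lemma polarZl a (x z : 'rV[R]_n) : polar QL (a *: x) z = a * polar QL x z.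
Proof. by have := (proj2 hQL) a x 0 z; rewrite addr0 /polar add0r QL0 => ->; ring. Qed.
Lemma polarZr a (x z : 'rV[R]_n) : polar QL z (a *: x) = a * polar QL z x.
Proof. by rewrite polarC polarZl polarC. Qed.
Lemma polarNr (x z : 'rV[R]_n) : polar QL z (- x) = - polar QL z x.
Proof. by rewrite -scaleN1r polarZr mulN1r. Qed.
Lemma polar0l (z : 'rV[R]_n) : polar QL 0 z = 0.
Proof. by rewrite /polar add0r QL0; ring. Qed.
Lemma polarxx (x : 'rV[R]_n) : polar QL x x = 2 * QL x.
Proof. by rewrite /polar -mulr2n -scaler_nat (proj1 hQL); ring. Qed.
Lemma QLD (x y : 'rV[R]_n) : QL (x + y) = QL x + QL y + polar QL x y.
Proof. by rewrite /polar; ring. Qed.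

Definition lin (g : V -> R) := forall a x y, g (a *: x + y) = a * g x + g y.

Lemma lin0 g : lin g -> g 0 = 0.
Proof.
move=> hg; have h := hg 1 0 0; rewrite scaler0 addr0 mul1r in h.
by apply: (addrI (g 0)); rewrite -h addr0.
Qed.
Lemma linD g : lin g -> forall x y, g (x + y) = g x + g y.
Proof. by move=> hg x y; have := hg 1 x y; rewrite scale1r mul1r. Qed.
Lemma linZ g : lin g -> forall a x, g (a *: x) = a * g x.
Proof. by move=> hg a x; have := hg a x 0; rewrite addr0 lin0 // addr0. Qed.
Lemma linN g : lin g -> forall x, g (- x) = - g x.
Proof. by move=> hg x; rewrite -scaleN1r linZ // mulN1r. Qed.

Definition eH (k : 'I_4) : V := (0, \row_(j < 4) (j == k)%:R).
Definition eLv (v : 'rV[R]_n) : V := (v, 0).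

Lemma Vdecomp (x : V) : x = eLv x.1 + x.2 0 o4_0 *: eH o4_0 + x.2 0 o4_1 *: eH o4_1
  + x.2 0 o4_2 *: eH o4_2 + x.2 0 o4_3 *: eH o4_3.
Proof.
case: x => a b; rewrite /eLv /eH; congr pair => /=.
  by rewrite !scaler0 !addr0.
by apply: row4_eq; rewrite !mxE /=; ring.
Qed.

Lemma gexp g : lin g -> forall x, g x = g (eLv x.1) + x.2 0 o4_0 * g (eH o4_0)
  + x.2 0 o4_1 * g (eH o4_1) + x.2 0 o4_2 * g (eH o4_2) + x.2 0 o4_3 * g (eH o4_3).
Proof. by move=> hg x; rewrite {1}(Vdecomp x) !linD // !linZ. Qed.


Definition Concl (P : V -> Prop) :=
  exists (m : nat) (QLam : 'rV[R]_m -> R), quad_form QLam /\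
    exists phi : 'rV[R]_2 * 'rV[R]_m -> V,
      [/\ (forall (a : R) y z, phi (a *: y + z) = a *: phi y + phi z),
          injective phi,
          (forall x, P x <-> exists y, phi y = x) &
          (forall y, QLH2 QL (phi y) = QHL QLam y)].

Section Core.
Variable g : V -> R.
Hypothesis hg : lin g.
Hypothesis hg0 : g (eH o4_0) = 1.

Let ell v := g (eLv v).
Let a1 := g (eH o4_1).
Let a2 := g (eH o4_2).
Let a3 := g (eH o4_3).

Lemma ellD v w : ell (v + w) = ell v + ell w.
Proof. by rewrite /ell -linD //; congr g; rewrite /eLv; congr pair; rewrite addr0. Qed.
Lemma ellZ a v : ell (a *: v) = a * ell v.
Proof. by rewrite /ell -linZ //; congr g; rewrite /eLv; congr pair; rewrite scaler0. Qed.

Lemma lsD (x z : 'rV[R]_(n + 1)) : lsubmx (x + z) = lsubmx x + lsubmx z.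
Proof. by apply/matrixP => i j; rewrite !mxE. Qed.
Lemma lsZ a (x : 'rV[R]_(n + 1)) : lsubmx (a *: x) = a *: lsubmx x.
Proof. by apply/matrixP => i j; rewrite !mxE. Qed.

Let sc (z : 'rV[R]_(n + 1)) := rsubmx z 0 0.

Lemma scD z w : sc (z + w) = sc z + sc w.
Proof. by rewrite /sc !mxE. Qed.
Lemma scZ a z : sc (a *: z) = a * sc z.
Proof. by rewrite /sc !mxE. Qed.

Definition QLam (z : 'rV[R]_(n + 1)) : R :=
  QL (lsubmx z) - ell (lsubmx z) * sc z - (a1 + a2 * a3) * sc z ^+ 2.

Definition phiC (y : 'rV[R]_2 * 'rV[R]_(n + 1)) : V :=
  let xL := lsubmx y.2 in let s := sc y.2 in
  let y0 := y.1 0 o2_0 in let y1 := y.1 0 o2_1 in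
  (xL, mk4 (- (ell xL + a1 * s + 2 * a2 * a3 * s) - y0 * a2 - y1 * a3) s (a3 * s + y0) (a2 * s + y1)).

Lemma polarQLam x z : polar QLam x z = polar QL (lsubmx x) (lsubmx z)
  - ell (lsubmx x) * sc z - ell (lsubmx z) * sc x - 2 * (a1 + a2 * a3) * sc x * sc z.
Proof. by rewrite /polar /QLam (lsD x z) (scD x z) ellD; ring. Qed.

Lemma QLam_quad : quad_form QLam.
Proof.
split.
  by move=> a x; rewrite /QLam (lsZ a x) (scZ a x) ellZ (proj1 hQL); ring.
move=> a x y z; rewrite !polarQLam (lsD (a *: x) y) (lsZ a x) (scD (a *: x) y) (scZ a x) (proj2 hQL) ellD ellZ.
ring.
Qed.

Lemma Core : Concl (fun x => g x = 0).
Proof.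
exists (n + 1)%N, QLam; split; first exact: QLam_quad.
exists phiC; split.
- move=> a [y1 y2] [z1 z2]; rewrite /phiC /=.
  rewrite (lsD (a *: y2) z2) (lsZ a y2) (scD (a *: y2) z2) (scZ a y2) ellD ellZ.
  congr pair; apply: row4_eq; rewrite !mxE /=; ring.
- move=> y z e.
  have e1 := f_equal fst e; have e2 := f_equal (fun v : V => v.2 0 o4_1) e.
  have e3 := f_equal (fun v : V => v.2 0 o4_2) e; have e4 := f_equal (fun v : V => v.2 0 o4_3) e.
  rewrite /phiC /= !mxE /= in e1 e2 e3 e4.
  rewrite e2 in e3 e4; move/addrI: e3 => e3; move/addrI: e4 => e4.
  clear e; case: y z e1 e2 e3 e4 => [y1 y2] [z1 z2] /= e1 e2 e3 e4; congr pair.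
    by apply: row2_eq.
  rewrite -(hsubmxK y2) -(hsubmxK z2) e1; congr row_mx.
  by apply/matrixP => i j; rewrite !ord1.
- move=> x; split.
    move=> gx.
    exists (mk2 (x.2 0 o4_2 - a3 * x.2 0 o4_1) (x.2 0 o4_3 - a2 * x.2 0 o4_1),
            row_mx x.1 (const_mx (x.2 0 o4_1))).
    have hs : sc (row_mx x.1 (const_mx (x.2 0 o4_1)) : 'rV[R]_(n + 1)) = x.2 0 o4_1.
      by rewrite /sc row_mxKr mxE.
    rewrite /phiC /= row_mxKl hs !mxE /=.
    case: x gx hs => [xa xb] gx hs /=; congr pair.
    apply: row4_eq; rewrite !mxE /=; try ring.
    move: gx; rewrite (gexp g hg) hg0 /= -/a1 -/a2 -/a3 => gx.
    rewrite -[RHS]subr0 -gx /ell /=; ring.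
  move=> [y <-]; rewrite (gexp g hg) hg0 /phiC /= !mxE /= -/a1 -/a2 -/a3.
  rewrite /ell; ring.
- move=> y; rewrite /QLH2 /QHL /phiC /QLam /= !mxE /=; ring.
Qed.

End Core.

Section Transfer.
Variables (sig tau : V -> V).
Hypothesis sigL : forall a x y, sig (a *: x + y) = a *: sig x + sig y.
Hypothesis sigK : forall x, sig (tau x) = x.
Hypothesis tauK : forall x, tau (sig x) = x.
Hypothesis sigQ : forall x, QLH2 QL (sig x) = QLH2 QL x.

Lemma transfer (P : V -> Prop) : Concl (fun x => P (sig x)) -> Concl P.
Proof.
move=> [m [Q [hQ [phi [h1 h2 h3 h4]]]]].
exists m, Q; split => //; exists (fun y => sig (phi y)); split.
- by move=> a y z; rewrite h1 sigL.
- by move=> y z e; apply: h2; rewrite -[phi y]tauK e tauK.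
- move=> x; rewrite -{1}(sigK x) h3; split => [[y e]|[y e]]; exists y.
    by rewrite e sigK.
  by rewrite -e tauK.
- by move=> y; rewrite sigQ h4.
Qed.

Lemma via_sig g : lin g -> g (sig (eH o4_0)) = 1 -> Concl (fun x => g x = 0).
Proof.
move=> hg h; apply: transfer; apply: (Core (fun x => g (sig x))) => //.
by move=> a x y; rewrite sigL hg.
Qed.
End Transfer.

Definition sw01 (x : V) : V := (x.1, mk4 (x.2 0 o4_1) (x.2 0 o4_0) (x.2 0 o4_2) (x.2 0 o4_3)).
Definition sw02 (x : V) : V := (x.1, mk4 (x.2 0 o4_2) (x.2 0 o4_3) (x.2 0 o4_0) (x.2 0 o4_1)).
Definition sw03 (x : V) : V := (x.1, mk4 (x.2 0 o4_3) (x.2 0 o4_2) (x.2 0 o4_1) (x.2 0 o4_0)).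

Ltac swt := repeat (move=> [? ?] || move=> ?); rewrite /sw01 /sw02 /sw03 /QLH2 /=;
  try (congr pair; apply: row4_eq); rewrite !mxE /=; ring.

Lemma sw01L a x y : sw01 (a *: x + y) = a *: sw01 x + sw01 y. Proof. by swt. Qed.
Lemma sw01K x : sw01 (sw01 x) = x. Proof. by case: x => ? ?; swt. Qed.
Lemma sw01Q x : QLH2 QL (sw01 x) = QLH2 QL x. Proof. by swt. Qed.
Lemma sw02L a x y : sw02 (a *: x + y) = a *: sw02 x + sw02 y. Proof. by swt. Qed.
Lemma sw02K x : sw02 (sw02 x) = x. Proof. by case: x => ? ?; swt. Qed.
Lemma sw02Q x : QLH2 QL (sw02 x) = QLH2 QL x. Proof. by swt. Qed.
Lemma sw03L a x y : sw03 (a *: x + y) = a *: sw03 x + sw03 y. Proof. by swt. Qed.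
Lemma sw03K x : sw03 (sw03 x) = x. Proof. by case: x => ? ?; swt. Qed.
Lemma sw03Q x : QLH2 QL (sw03 x) = QLH2 QL x. Proof. by swt. Qed.

Lemma sw01e : sw01 (eH o4_0) = eH o4_1. Proof. by swt. Qed.
Lemma sw02e : sw02 (eH o4_0) = eH o4_2. Proof. by swt. Qed.
Lemma sw03e : sw03 (eH o4_0) = eH o4_3. Proof. by swt. Qed.

Definition Ev (v : 'rV[R]_n) (x : V) : V :=
  (x.1 + x.2 0 o4_0 *: v,
   mk4 (x.2 0 o4_0) (x.2 0 o4_1 - polar QL x.1 v - QL v * x.2 0 o4_0) (x.2 0 o4_2) (x.2 0 o4_3)).

Lemma EvL v a x y : Ev v (a *: x + y) = a *: Ev v x + Ev v y.
Proof.
case: x y => [x1 x2] [y1 y2]; rewrite /Ev /=; congr pair.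
  by apply/rowP => i; rewrite !mxE; ring.
have e : polar QL (a *: x1 + y1) v = a * polar QL x1 v + polar QL y1 v by exact: (proj2 hQL).
by apply: row4_eq; rewrite !mxE /= ?(proj2 hQL); ring.
Qed.

Lemma EvK v x : Ev (- v) (Ev v x) = x.
Proof.
case: x => [x1 x2]; rewrite /Ev /=; congr pair.
  by apply/rowP => i; rewrite !mxE /= mulrN addrK.
apply: row4_eq; rewrite !mxE //=.
by rewrite polarNr polarDl polarZl polarxx QLN; ring.
Qed.

Lemma EvQ v x : QLH2 QL (Ev v x) = QLH2 QL x.
Proof.
case: x => [x1 x2]; rewrite /Ev /QLH2 /= !mxE /= QLD (proj1 hQL) polarZr; ring.
Qed.

Lemma Eve g v : lin g -> g (Ev v (eH o4_0)) = g (eLv v) + g (eH o4_0) - QL v * g (eH o4_1).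
Proof.
move=> hg; rewrite (gexp g hg) /Ev /eH /= !mxE /= add0r scale1r polar0l; ring.
Qed.

End Gen.

Arguments eH {R n}.
Arguments eLv {R n}.
Arguments mk4 {R}.
Arguments mk2 {R}.
Arguments sw01 {R n}.
Arguments sw02 {R n}.
Arguments sw03 {R n}.
Arguments lin {R n}.

Section Gen2.
Variable R : comNzRingType.
Variable n : nat.
Notation V := ('rV[R]_n * 'rV[R]_4)%type.

Lemma DivLemma (g : V -> R) (c : R) : lin g ->
  (forall i : 'I_n, exists t, g (eLv 'e_i) = c * t) ->
  (forall k : 'I_4, exists t, g (eH k) = c * t) -> forall x, exists t, g x = c * t.
Proof.
move=> hg hL hH x; rewrite (gexp _ _ g hg).
have hLx : exists t, g (eLv x.1) = c * t.
  rewrite [x.1]row_sum_delta.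
  apply: (big_ind (fun v => exists t, g (eLv v) = c * t)).
  - by exists 0; rewrite mulr0 -(lin0 _ _ _ hg).
  - move=> u v [t1 e1] [t2 e2]; exists (t1 + t2).
    have -> : eLv (u + v) = eLv u + eLv v by apply: injective_projections => //=; rewrite addr0.
    by rewrite (linD _ _ _ hg) e1 e2 mulrDr.
  - move=> i _; have [t e] := hL i; exists (x.1 0 i * t).
    have -> : eLv (x.1 0 i *: 'e_i) = x.1 0 i *: eLv 'e_i by apply: injective_projections => //=; rewrite scaler0.
    by rewrite (linZ _ _ _ hg) e; ring.
have [t0 e0] := hLx; have [t1 e1] := hH o4_0; have [t2 e2] := hH o4_1.
have [t3 e3] := hH o4_2; have [t4 e4] := hH o4_3.
exists (t0 + x.2 0 o4_0 * t1 + x.2 0 o4_1 * t2 + x.2 0 o4_2 * t3 + x.2 0 o4_3 * t4).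
rewrite e0 e1 e2 e3 e4; ring.
Qed.

Lemma Concl_iff (QL : 'rV[R]_n -> R) (P P' : V -> Prop) :
  (forall x, P x <-> P' x) -> Concl R n QL P -> Concl R n QL P'.
Proof.
move=> e [m [Q [hQ [phi [h1 h2 h3 h4]]]]]; exists m, Q; split => //; exists phi; split => //.
by move=> x; rewrite -e.
Qed.

Lemma idL (a : R) (x y : V) : id (a *: x + y) = a *: id x + id y. Proof. by []. Qed.

End Gen2.

Section Main.
Variable p : nat.
Hypothesis pP : prime p.
Variable n : nat.
Variable QL : 'rV[padint p]_n -> padint p.
Hypothesis hQL : quad_form QL.
Notation R := (padint p).
Notation V := ('rV[padint p]_n * 'rV[padint p]_4)%type.

Lemma polarH2 (w x : V) : polar (QLH2 QL) w x = polar QL w.1 x.1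
  + w.2 0 o4_0 * x.2 0 o4_1 + w.2 0 o4_1 * x.2 0 o4_0
  + w.2 0 o4_2 * x.2 0 o4_3 + w.2 0 o4_3 * x.2 0 o4_2.
Proof. rewrite /polar /QLH2 /= !mxE; ring. Qed.

Lemma linf (w : V) : lin (fun x => polar (QLH2 QL) w x).
Proof.
move=> a x y; rewrite !polarH2 /= !mxE ?(polarZDr _ _ _ hQL); ring.
Qed.

Lemma fww (w : V) : polar (QLH2 QL) w w = 2 * QLH2 QL w.
Proof. by rewrite polarH2 (polarxx _ _ _ hQL) /QLH2; ring. Qed.

Lemma viaU (sig tau : V -> V) g :
  (forall a x y, sig (a *: x + y) = a *: sig x + sig y) ->
  (forall x, sig (tau x) = x) -> (forall x, tau (sig x) = x) ->
  (forall x, QLH2 QL (sig x) = QLH2 QL x) ->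
  lin g -> isU p (g (sig (eH o4_0))) -> Concl _ _ QL (fun x => g x = 0).
Proof.
move=> h1 h2 h3 h4 hg [u hu].
apply: (Concl_iff _ _ _ (fun x => u * g x = 0)).
  move=> x; split => [e|->]; last by rewrite mulr0.
  by rewrite -[g x]mul1r -hu -mulrA e mulr0.
apply: (via_sig _ _ QL hQL sig tau h1 h2 h3 h4).
  by move=> a x y; rewrite hg; ring.
by rewrite mulrC.
Qed.

Theorem mainM (w : V) (hw : QLH2 QL w != 0) :
  Concl _ _ QL (fun x => polar (QLH2 QL) w x = 0).
Proof.
set f := fun x => polar (QLH2 QL) w x.
have hf : lin f := linf w.
pose coef (t : ('I_n + 'I_4)%type) := match t with inl i => f (eLv 'e_i) | inr k => f (eH k) end.
case: (boolP (has (fun x => x != 0) (codom coef))) => hs; last first.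
  exfalso; move/hasPn: hs => hz.
  have hz' : forall t, coef t = 0.
    by move=> t; have := hz _ (codom_f coef t); rewrite negbK => /eqP.
  have [t et] := DivLemma _ _ f 0 hf (fun i => ex_intro _ 0 (esym (etrans (mulr0 _) (esym (hz' (inl i))))))
    (fun k => ex_intro _ 0 (esym (etrans (mulr0 _) (esym (hz' (inr k)))))) w.
  move: et; rewrite mul0r /f fww => /(P3 p pP _ _) [].
    by move=> h2; have := P4 p pP; rewrite h2 eqxx.
  by move=> h; rewrite h eqxx in hw.
have [c [hc hc0 hcd]] := find_div p pP _ hs.
have hfx : forall x, exists t, f x = c * t.
  apply: (DivLemma _ _ f c hf).
    by move=> i; apply: (hcd _ (codom_f coef (inl i))).
  by move=> k; apply: (hcd _ (codom_f coef (inr k))).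
pose g x := proj1_sig (constructive_indefinite_description _ (hfx x)).
have hgx : forall x, f x = c * g x.
  by move=> x; rewrite /g; case: constructive_indefinite_description.
have hg : lin g.
  move=> a x y; apply: (mulfI' p pP c) => //.
  by rewrite -hgx hf !hgx; ring.
apply: (Concl_iff _ _ _ (fun x => g x = 0)).
  move=> x; rewrite -/(f x) hgx; split => [->|]; first by rewrite mulr0.
  by case/(P3 p pP _ _) => // h; rewrite h eqxx in hc0.
have [t0 et0] := codomP hc.
have hb : forall x, f x = c -> g x = 1.
  by move=> x e; apply: (mulfI' p pP c) => //; rewrite -hgx e mulr1.
case: t0 et0 => [i|k] /= e.
- have hv : g (eLv 'e_i) = 1 by apply: hb; rewrite e.
  set v : 'rV[R]_n := 'e_i in hv.
  case: (eqVneq (zseq (g (eH o4_0)) 0) 0) => h0; last first.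
    by apply: (viaU id id) => //; exact: P1.
  case: (eqVneq (zseq (g (eH o4_1)) 0) 0) => h1; last first.
    apply: (viaU sw01 sw01 g (sw01L _ _) (sw01K _ _) (sw01K _ _) (sw01Q _ _ QL)) => //.
    by rewrite sw01e; exact: P1.
  apply: (viaU (Ev _ _ QL v) (Ev _ _ QL (- v)) g (EvL _ _ QL hQL v)) => //.
  - by move=> x; have := EvK _ _ QL hQL (- v) x; rewrite opprK.
  - exact: EvK.
  - exact: EvQ.
  rewrite (Eve _ _ QL hQL g v hg) hv; apply: (P1 p pP).
  move: (g (eH o4_0)) (g (eH o4_1)) (QL v) h0 h1 => a0 a1 q h0' h1'.
  rewrite (zseqD p) (zseqN p) (zseqD p) (zseqM p) (zseq1 p) h0' h1' mulr0 subr0 addr0.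
  exact: oner_neq0.
- have hk : g (eH k) = 1 by apply: hb; rewrite e.
  clear e; case: k hk => [[|[|[|[|k]]]] hk] hk1; last by exfalso; clear hk1; move: hk; rewrite !ltnS ltn0.
  + rewrite (_ : Ordinal hk = o4_0) in hk1; last exact: val_inj.
    exact: (Core _ _ QL hQL g hg hk1).
  + rewrite (_ : Ordinal hk = o4_1) in hk1; last exact: val_inj.
    exact: (via_sig _ _ QL hQL sw01 sw01 (sw01L _ _) (sw01K _ _) (sw01K _ _) (sw01Q _ _ QL) g hg (etrans (f_equal g (sw01e _ _)) hk1)).
  + rewrite (_ : Ordinal hk = o4_2) in hk1; last exact: val_inj.
    exact: (via_sig _ _ QL hQL sw02 sw02 (sw02L _ _) (sw02K _ _) (sw02K _ _) (sw02Q _ _ QL) g hg (etrans (f_equal g (sw02e _ _)) hk1)).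
  + rewrite (_ : Ordinal hk = o4_3) in hk1; last exact: val_inj.
    exact: (via_sig _ _ QL hQL sw03 sw03 (sw03L _ _) (sw03K _ _) (sw03K _ _) (sw03Q _ _ QL) g hg (etrans (f_equal g (sw03e _ _)) hk1)).
Qed.

End Main.

Theorem mainTheorem12 (p : nat) (p_prime : prime p)
    (n : nat) (QL : 'rV[padint p]_n -> padint p) (hQL : quad_form QL)
    (w : 'rV[padint p]_n * 'rV[padint p]_4) (hw : QLH2 QL w != 0) :
  exists (m : nat) (QLam : 'rV[padint p]_m -> padint p),
    quad_form QLam /\
    exists phi : 'rV[padint p]_2 * 'rV[padint p]_m -> 'rV[padint p]_n * 'rV[padint p]_4,
      [/\ (forall (a : padint p) y z, phi (a *: y + z) = a *: phi y + phi z),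
          injective phi,
          (forall x, polar (QLH2 QL) w x = 0 <-> exists y, phi y = x) &
          (forall y, QLH2 QL (phi y) = QHL QLam y)].
Proof.
exact: (mainM p p_prime n QL hQL w hw).
Qed.
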